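(* Let $f:[0,\infty)\to\mathbb{R}$ be a continuous superquadratic function, let $\Phi:\mathbb{M}_n\to\mathbb{M}_m$ be a unital positive linear map, and let $\tau$ be a state on $\mathbb{M}_m$. Then for every positive semidefinite $A\in\mathbb{M}_n^+$, $$f\big(\tau(\Phi(A))\big)\le \tau\big(\Phi(f(A))\big)-\tau\Big(\Phi\big(f(|A-\tau(\Phi(A))I|)\big)\Big).$$
   Context: A function $f:[0,\infty)\to\mathbb{R}$ is called superquadratic if for every $s\ge 0$ there exists a constant $C_s\in\mathbb{R}$ such that $f(t)\ge f(s)+C_s(t-s)+f(|t-s|)$ for all $t\ge0$. A linear map $\Phi$ is positive if it maps positive semidefinite matrices to positive semidefinite matrices and unital if $\Phi(I)=I$. A state on $\mathbb{M}_m$ is a positive linear functional $\tau$ with $\tau(I)=1$. $f(X)$ is defined by the spectral functional calculus and $|X|=(X^*X)^{1/2}$. *)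

(* Defs.v *)
From HB Require Import structures.
From mathcomp Require Import all_boot all_order all_algebra.
Set Implicit Arguments. Unset Strict Implicit. Unset Printing Implicit Defensive.
Import Order.TTheory GRing.Theory Num.Theory.
Local Open Scope ring_scope.
Local Open Scope sesquilinear_scope.

Section Defs.
Variable C : numClosedFieldType.

Definition adjmx m n (A : 'M[C]_(m, n)) : 'M[C]_(n, m) := A ^t*.

Definition psdmx n (A : 'M[C]_n) : Prop :=
  adjmx A = A /\ forall v : 'rV[C]_n, 0 <= (v *m A *m adjmx v) 0 0.

(* spectral functional calculus: for a normal A = P^-1 diag(d) P (P unitary,
   given by mathcomp's spectral theorem), f(A) := P^-1 diag(f d) P *)
Definition fcalc n (f : C -> C) (A : 'M[C]_n) : 'M[C]_n :=
  invmx (spectralmx A) *m diag_mx (map_mx f (spectral_diag A)) *m spectralmx A.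

Definition absmx n (X : 'M[C]_n) : 'M[C]_n := fcalc (fun x : C => sqrtC x) (adjmx X *m X).

Definition superquadratic (f : C -> C) : Prop :=
  forall s, 0 <= s -> exists Cs : C, Cs \is Num.real /\
    forall t, 0 <= t -> f s + Cs * (t - s) + f `|t - s| <= f t.

Definition cont_nonneg (f : C -> C) : Prop :=
  forall x, 0 <= x -> forall e : C, 0 < e -> exists2 d : C, 0 < d &
    forall y, 0 <= y -> `|y - x| < d -> `|f y - f x| < e.

Definition real_on_nonneg (f : C -> C) : Prop :=
  forall x, 0 <= x -> f x \is Num.real.

Definition positive_map n m (Phi : 'M[C]_n -> 'M[C]_m) : Prop :=
  forall A, psdmx A -> psdmx (Phi A).

Definition unital_map n m (Phi : 'M[C]_n -> 'M[C]_m) : Prop :=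
  Phi 1%:M = 1%:M.

Definition is_state m (tau : 'M[C]_m -> C) : Prop :=
  scalar tau /\ (forall A, psdmx A -> 0 <= tau A) /\ tau 1%:M = 1.

End Defs.

(* Main.v *)
Require Import Defs.
From HB Require Import structures.
From mathcomp Require Import all_boot all_order all_algebra.
From mathcomp Require Import ring.
Import Order.TTheory GRing.Theory Num.Theory.
Local Open Scope ring_scope.
Local Open Scope sesquilinear_scope.

Set Implicit Arguments. Unset Strict Implicit.
Section S.
Variable C : numClosedFieldType.

Definition rep n (P : 'M[C]_n) (u : 'rV[C]_n) := invmx P *m diag_mx u *m P.

Lemma rep_fcalc n (P : 'M[C]_n) u g : P \is unitarymx ->
  fcalc g (rep P u) = rep P (map_mx g u).
Proof.
move=> PU; set B := rep P u.
have Bn : B \is normalmx by apply/orthomx_spectral_subproof; exists (P, u).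
have /orthomx_spectralP eB := Bn.
rewrite /fcalc; move: eB; set U := spectralmx B; set a := spectral_diag B => eB.
have Uu : U \in unitmx := spectral_unit B.
have Pu := unitarymx_unit PU.
set W := P *m invmx U.
have EW : W *m diag_mx a = diag_mx u *m W.
  rewrite /W -mulmxA.
  have -> : invmx U *m diag_mx a = B *m invmx U by rewrite eB mulmxK.
  by rewrite /B /rep !mulmxA mulmxV // mul1mx.
have key : forall W : 'M[C]_n, W *m diag_mx a = diag_mx u *m W ->
     W *m diag_mx (map_mx g a) = diag_mx (map_mx g u) *m W.
  move=> {EW}W EW; apply/matrixP => i j; have := congr1 (fun M : 'M[C]_n => M i j) EW.
  rewrite !mul_mx_diag !mul_diag_mx !mxE => e.
  have [->|nz] := eqVneq (W i j) 0; first by rewrite mul0r mulr0.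
  have -> : a 0 j = u 0 i by apply: (mulfI nz); rewrite e mulrC.
  by rewrite mulrC.
have EW2 := key W EW.
have := congr1 (fun M => invmx P *m M *m U) EW2; rewrite /W /rep.
rewrite !mulmxA mulVmx // mul1mx => ->.
by rewrite mulmxKV.
Qed.

Lemma rep_sub n (P : 'M[C]_n) u w : rep P (u - w) = rep P u - rep P w.
Proof. by rewrite /rep linearB /= mulmxBr mulmxBl. Qed.

Lemma rep_scale n (P : 'M[C]_n) (c : C) u : rep P (c *: u) = c *: rep P u.
Proof. by rewrite /rep linearZ /= -scalemxAr -scalemxAl. Qed.

Lemma rep_const n (P : 'M[C]_n) (c : C) : P \in unitmx -> rep P (const_mx c) = c%:M.
Proof.
move=> Pu; rewrite /rep diag_const_mx mul_mx_scalar -scalemxAl mulVmx //.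
by rewrite scalemx1.
Qed.

Lemma rep_mul n (P : 'M[C]_n) u w : P \in unitmx ->
  rep P u *m rep P w = rep P (\row_j (u 0 j * w 0 j)).
Proof.
move=> Pu; rewrite /rep !mulmxA mulmxK //.
congr (_ *m _); rewrite -!mulmxA; congr (_ *m _).
apply/matrixP => i j; rewrite mul_diag_mx !mxE.
by case: eqP => [->|]; rewrite ?mulr1n ?mulr0n ?mulr0.
Qed.

Lemma rep_adj n (P : 'M[C]_n) (u : 'rV[C]_n) : P \is unitarymx ->
  (rep P u)^t* = rep P (map_mx (@Num.conj C) u).
Proof.
move=> PU; rewrite /rep invmx_unitary //.
rewrite !trmx_mul !map_mxM trmxCK !mulmxA.
by rewrite tr_diag_mx map_diag_mx.
Qed.

Lemma rep_psd n (P : 'M[C]_n) (u : 'rV[C]_n) : P \is unitarymx ->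
  (forall j, 0 <= u 0 j) -> psdmx (rep P u).
Proof.
move=> PU u0; split.
  rewrite /adjmx rep_adj //.
  have -> : map_mx (@Num.conj C) u = u.
    apply/matrixP => i j; rewrite mxE (ord1 i); exact: geC0_conj.
  by [].
move=> v; rewrite /rep invmx_unitary //.
set w := v *m P^t*.
have -> : v *m (P^t* *m diag_mx u *m P) *m (v^t*) = w *m diag_mx u *m w^t*.
  by rewrite /w !trmx_mul !map_mxM trmxCK !mulmxA.
rewrite mul_mx_diag !mxE; apply: sumr_ge0 => j _; rewrite !mxE.
by rewrite [_ * u 0 j]mulrC -mulrA -normCK mulr_ge0 // exprn_ge0.
Qed.

Lemma linB n m (Phi : 'M[C]_n -> 'M[C]_m) : linear Phi ->
  forall u w, Phi (u - w) = Phi u - Phi w.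
Proof. by move=> hl u w; rewrite addrC -scaleN1r hl scaleN1r addrC. Qed.

Lemma linZ n m (Phi : 'M[C]_n -> 'M[C]_m) : linear Phi ->
  forall c u, Phi (c *: u) = c *: Phi u.
Proof.
move=> hl c u; have h0 : Phi 0 = 0 by rewrite -(subrr 0) linB // subrr.
by rewrite -[c *: u]addr0 hl h0 addr0.
Qed.

Lemma tauB m (tau : 'M[C]_m -> C) : scalar tau ->
  forall u w, tau (u - w) = tau u - tau w.
Proof. by move=> hl u w; rewrite addrC -scaleN1r hl mulN1r addrC. Qed.

Lemma tauZ m (tau : 'M[C]_m -> C) : scalar tau ->
  forall c u, tau (c *: u) = c * tau u.
Proof.
move=> hl c u; have h0 : tau 0 = 0 by rewrite -(subrr 0) tauB // subrr.
by rewrite -[c *: u]addr0 hl h0 addr0.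
Qed.
End S.
Unset Implicit Arguments. Set Strict Implicit.

Theorem lemma2p6 (C : numClosedFieldType) (n m : nat) (f : C -> C)
    (Phi : 'M[C]_n -> 'M[C]_m) (tau : 'M[C]_m -> C)
    (f_real : real_on_nonneg f) (f_cont : cont_nonneg f)
    (f_sq : superquadratic f)
    (Phi_lin : linear Phi) (Phi_pos : positive_map Phi)
    (Phi_unital : unital_map Phi) (tau_state : is_state tau)
    (A : 'M[C]_n) (hA : psdmx A) :
  f (tau (Phi A)) <=
    tau (Phi (fcalc f A))
    - tau (Phi (fcalc f (absmx (A - (tau (Phi A))%:M)))).
Proof.
have [tau_lin [tau_pos tau1]] := tau_state.
set s := tau (Phi A).
have s0 : 0 <= s := tau_pos _ (Phi_pos _ hA).
have [Cs [_ hCs]] := f_sq s s0.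
set P := spectralmx A; set d := spectral_diag A.
have PU : P \is unitarymx := spectral_unitarymx A.
have Pu := unitarymx_unit PU.
have Anorm : A \is normalmx.
  by apply/normalmxP; case: hA => hadj _; rewrite /adjmx in hadj; rewrite hadj.
have eA : A = rep P d by apply/orthomx_spectralP.
have d0 : forall j, 0 <= d 0 j.
  move=> j; case: hA => _ /(_ (delta_mx 0 j *m P)) h.
  move: h; rewrite /adjmx eA /rep invmx_unitary //.
  rewrite trmx_mul map_mxM !mulmxA.
  rewrite !mulmxtVK // mul_mx_diag !mxE (bigD1 j) //= big1 => [|k kj]; rewrite !mxE ?eqxx /=.
    by rewrite mul1r conjC1 mulr1 addr0.
  by rewrite (negbTE kj) !mul0r.
set e := d - const_mx s.
have eY : A - s%:M = rep P e by rewrite /e rep_sub rep_const // -eA.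
have eabs : absmx (A - s%:M) = rep P (map_mx (fun z => `|z|) e).
  rewrite /absmx eY /adjmx rep_adj // rep_mul // rep_fcalc //.
  have -> : map_mx sqrtC (\row_j ((map_mx (@Num.conj C) e) 0 j * e 0 j))
      = map_mx (fun z => `|z|) e; last by [].
  apply/matrixP => i j; rewrite !mxE (ord1 i).
  by rewrite mulrC -normCK sqrCK.
have efA : fcalc f A = rep P (map_mx f d) by [].
have efabs : fcalc f (absmx (A - s%:M)) = rep P (map_mx f (map_mx (fun z => `|z|) e)).
  by rewrite eabs rep_fcalc.
set x := map_mx f d - const_mx (f s) - Cs *: e - map_mx f (map_mx (fun z => `|z|) e).
have xpsd : psdmx (rep P x).
  apply: rep_psd => // j; rewrite !mxE.
  have h := hCs (d 0 j) (d0 j).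
  rewrite -subr_ge0 in h.
  suff -> : f (d 0 j) - f s - Cs * (d 0 j - s) - f `|d 0 j - s| =
    f (d 0 j) - (f s + Cs * (d 0 j - s) + f `|d 0 j - s|) by [].
  by ring.
have ex : rep P x = fcalc f A - (f s)%:M - Cs *: (A - s%:M) - fcalc f (absmx (A - s%:M)).
  by rewrite !rep_sub rep_scale rep_const // efA efabs eY.
have := tau_pos _ (Phi_pos _ xpsd); rewrite ex.
rewrite -[(f s)%:M]scalemx1 -[s%:M]scalemx1.
rewrite !(linB Phi_lin) !(linZ Phi_lin) (linB Phi_lin) (linZ Phi_lin) Phi_unital.
rewrite !(tauB tau_lin) !(tauZ tau_lin) (tauB tau_lin) (tauZ tau_lin) tau1 -/s.
set T1 := tau (Phi _); set T2 := tau (Phi (fcalc f (absmx _))).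
move=> h; rewrite -subr_ge0.
suff -> : T1 - T2 - f s = T1 - f s * 1 - Cs * (s - s * 1) - T2 by [].
by ring.
Qed.
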